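(* Let $t\in\mathbb{Q}$, $t\neq2$, and let $x\in\overline{\mathbb{Q}}$ satisfy $f_t(x)=0$. Put $y=\sum_{i=0}^5 a_i x^i$. Then $f_t(y)=0$ and the point $[x,y,1]$ lies on $F_5\cap C_t$.
   Context: $F_5$ is the Fermat curve $x^5+y^5+z^5=0$ in $\mathbb{P}^2$. For $t\in\mathbb{Q}$, $t\neq2$, $C_t$ is the conic $x^2+y^2+z^2+t(xy+xz+yz)=0$. Put $u=\frac{3t^2-2t+2}{t^2+t-1}$, $v=\frac{t^5-5t^4+10t^3-20t^2+15t-7}{(t-2)(t^2+t-1)^2}$, $w=\frac{-3t^5+10t^4-20t^3+20t^2-20t+6}{(t-2)(t^2+t-1)^2}$, and $f_t=X^6+uX^5+vX^4+wX^3+vX^2+uX+1\in\mathbb{Q}[X]$. Put $s=(t^4-3t^3-t^2+3t+1)(t-2)$ (nonzero for rational $t\ne2$) and $a_0=-\frac{(t^2+1)(t^3-t^2+2t-3)}{s}$, $a_1=-\frac{3t^7-9t^6+16t^5-15t^4+10t^3-11t^2+8t-7}{(t^2+t-1)s}$, $a_2=\frac{2t^8-14t^7+52t^6-99t^5+100t^4-54t^3+38t^2-44t+13}{(t^2+t-1)(t-2)s}$, $a_3=\frac{t^8+t^7-21t^6+65t^5-90t^4+78t^3-57t^2+32t-15}{(t^2+t-1)(t-2)s}$, $a_4=-\frac{2t^5-6t^4+13t^3-14t^2+7t-5}{s}$, $a_5=-\frac{(t^2+t-1)(t^3-t^2+2t-3)}{s}$. *)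

(* Defs.v *)
From HB Require Import structures.
From mathcomp Require Import all_boot all_order all_algebra all_field.
Set Implicit Arguments. Unset Strict Implicit. Unset Printing Implicit Defensive.
Import Order.TTheory GRing.Theory Num.Theory.
Local Open Scope ring_scope.

Definition u_t (t : rat) : rat := (3*t^+2 - 2*t + 2) / (t^+2 + t - 1).
Definition v_t (t : rat) : rat :=
  (t^+5 - 5*t^+4 + 10*t^+3 - 20*t^+2 + 15*t - 7) / ((t - 2) * (t^+2 + t - 1)^+2).
Definition w_t (t : rat) : rat :=
  (-3*t^+5 + 10*t^+4 - 20*t^+3 + 20*t^+2 - 20*t + 6) / ((t - 2) * (t^+2 + t - 1)^+2).

Definition f_t (t : rat) : {poly rat} :=
  'X^6 + (u_t t)%:P * 'X^5 + (v_t t)%:P * 'X^4 + (w_t t)%:P * 'X^3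
  + (v_t t)%:P * 'X^2 + (u_t t)%:P * 'X + 1.

Definition s_t (t : rat) : rat := (t^+4 - 3*t^+3 - t^+2 + 3*t + 1) * (t - 2).

Definition a0 (t : rat) : rat := - ((t^+2 + 1) * (t^+3 - t^+2 + 2*t - 3)) / s_t t.
Definition a1 (t : rat) : rat :=
  - (3*t^+7 - 9*t^+6 + 16*t^+5 - 15*t^+4 + 10*t^+3 - 11*t^+2 + 8*t - 7)
  / ((t^+2 + t - 1) * s_t t).
Definition a2 (t : rat) : rat :=
  (2*t^+8 - 14*t^+7 + 52*t^+6 - 99*t^+5 + 100*t^+4 - 54*t^+3 + 38*t^+2 - 44*t + 13)
  / ((t^+2 + t - 1) * (t - 2) * s_t t).
Definition a3 (t : rat) : rat :=
  (t^+8 + t^+7 - 21*t^+6 + 65*t^+5 - 90*t^+4 + 78*t^+3 - 57*t^+2 + 32*t - 15)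
  / ((t^+2 + t - 1) * (t - 2) * s_t t).
Definition a4 (t : rat) : rat := - (2*t^+5 - 6*t^+4 + 13*t^+3 - 14*t^+2 + 7*t - 5) / s_t t.
Definition a5 (t : rat) : rat := - ((t^+2 + t - 1) * (t^+3 - t^+2 + 2*t - 3)) / s_t t.

Definition a_coef (t : rat) (i : nat) : rat :=
  match i with
  | 0 => a0 t | 1 => a1 t | 2 => a2 t | 3 => a3 t | 4 => a4 t | 5 => a5 t | _ => 0
  end.

Definition fermat5 (R : nzRingType) (x y z : R) : R := x^+5 + y^+5 + z^+5.
Definition conic_t (t : rat) (x y z : algC) : algC :=
  x^+2 + y^+2 + z^+2 + ratr t * (x*y + x*z + y*z).

(* Main.v *)
Require Import Defs.
From HB Require Import structures.
From mathcomp Require Import all_boot all_order all_algebra all_field.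
From mathcomp Require Import ring zify.
Import Order.TTheory GRing.Theory Num.Theory.
Local Open Scope ring_scope.
Lemma par2 (n : int) : exists a, n = a * 2 \/ n = a * 2 + 1.
Proof.
exists (n %/ 2)%Z; have := divz_eq n 2; have := modz_ge0 n (isT : (2:int) != 0).
have := ltz_pmod n (isT : (0:int) < 2). lia.
Qed.
Lemma not_both_even (n d : int) : coprime `|n| `|d| -> n = 2 * (n %/ 2)%Z -> d = 2 * (d %/ 2)%Z -> False.
Proof.
move=> co hn hd.
have : (2 %| gcdn `|n| `|d|)%N.
  rewrite dvdn_gcd; apply/andP; split.
  - by rewrite hn abszM dvdn_mulr.
  - by rewrite hd abszM dvdn_mulr.
by rewrite (eqP co).
Qed.
Lemma parity_gen (P : int -> int -> int)
  (H1 : forall a b, exists K, P (a*2+1) (b*2) = 2*K+1)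
  (H2 : forall a b, exists K, P (a*2) (b*2+1) = 2*K+1)
  (H3 : forall a b, exists K, P (a*2+1) (b*2+1) = 2*K+1)
  (n d : int) : coprime `|n| `|d| -> P n d != 0.
Proof.
move=> co; apply/eqP=> h.
have [a ha] := par2 n; have [b hb] := par2 d.
case: ha => ha; case: hb => hb.
- apply: (@not_both_even n d co); [rewrite ha | rewrite hb]; rewrite mulzK //; ring.
- have [K HK] := H2 a b. rewrite ha hb in h. lia.
- have [K HK] := H1 a b. rewrite ha hb in h. lia.
- have [K HK] := H3 a b. rewrite ha hb in h. lia.
Qed.
Lemma d1_neq0 (t : rat) : t^+2 + t - 1 != 0.
Proof.
have H : (fun n d : int => n^+2 + n*d - d^+2) (numq t) (denq t) != 0.
  apply: (@parity_gen (fun n d : int => n^+2 + n*d - d^+2) _ _ _ _ _ (coprime_num_den t)) => a b /=.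
  - by exists (2*a^+2+2*a+2*a*b+b-2*b^+2); ring.
  - by exists (2*a^+2+2*a*b+a-2*b^+2-2*b-1); ring.
  - by exists (2*a^+2+2*a+2*a*b+ a + b -2*b^+2-2*b); ring.
move: H; apply: contra => /eqP h.
have hd : (denq t)%:Q != 0 by rewrite intr_eq0 denq_neq0.
rewrite /= -(@intr_eq0 rat) !(rmorphB, rmorphD, rmorphM, rmorphXn); apply/eqP.
rewrite -[t]divq_num_den in h.
set N := (numq t)%:Q in h *; set D := (denq t)%:Q in hd h *.
transitivity (((N/D)^+2 + N/D - 1) * D^+2); last by rewrite h mul0r.
by field.
Qed.
Lemma d3_neq0 (t : rat) : t^+4 - 3*t^+3 - t^+2 + 3*t + 1 != 0.
Proof.
have H : (fun n d : int => n^+4 - 3*n^+3*d - n^+2*d^+2 + 3*n*d^+3 + d^+4) (numq t) (denq t) != 0.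
  apply: (@parity_gen (fun n d : int => n^+4 - 3*n^+3*d - n^+2*d^+2 + 3*n*d^+3 + d^+4) _ _ _ _ _ (coprime_num_den t)) => a b /=.
  - by exists (8*a^+4*b^+0+16*a^+3*b^+0+12*a^+2*b^+0+4*a^+1*b^+0+-24*a^+3*b^+1+-36*a^+2*b^+1+-18*a^+1*b^+1+-3*a^+0*b^+1+-8*a^+2*b^+2+-8*a^+1*b^+2+-2*a^+0*b^+2+24*a^+1*b^+3+12*a^+0*b^+3+8*a^+0*b^+4); ring.
  - by exists (8*a^+4*b^+0+-12*a^+3*b^+0+-2*a^+2*b^+0+3*a^+1*b^+0+-24*a^+3*b^+1+-8*a^+2*b^+1+18*a^+1*b^+1+4*a^+0*b^+1+-8*a^+2*b^+2+36*a^+1*b^+2+12*a^+0*b^+2+24*a^+1*b^+3+16*a^+0*b^+3+8*a^+0*b^+4); ring.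
  - by exists (8*a^+4*b^+0+4*a^+3*b^+0+-8*a^+2*b^+0+-4*a^+1*b^+0+-24*a^+3*b^+1+-44*a^+2*b^+1+-8*a^+1*b^+1+8*a^+0*b^+1+-8*a^+2*b^+2+28*a^+1*b^+2+28*a^+0*b^+2+24*a^+1*b^+3+28*a^+0*b^+3+8*a^+0*b^+4); ring.
move: H; apply: contra => /eqP h.
have hd : (denq t)%:Q != 0 by rewrite intr_eq0 denq_neq0.
rewrite /= -(@intr_eq0 rat) !(rmorphB, rmorphD, rmorphM, rmorphXn); apply/eqP.
rewrite -[t]divq_num_den in h.
set N := (numq t)%:Q in h *; set D := (denq t)%:Q in hd h *.
transitivity (((N/D)^+4 - 3*(N/D)^+3 - (N/D)^+2 + 3*(N/D) + 1) * D^+4); last by rewrite h mul0r.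
by field.
Qed.
Lemma key (T x U V W A0 A1 A2 A3 A4 A5 : algC)
  (h1 : T^+2 + T - 1 != 0) (h2 : T - 2 != 0) (h3 : T^+4 - 3*T^+3 - T^+2 + 3*T + 1 != 0)
  (hU : U = ((3*T^+2 - 2*T + 2) / (T^+2 + T - 1))) (hV : V = ((T^+5 - 5*T^+4 + 10*T^+3 - 20*T^+2 + 15*T - 7) / ((T - 2) * (T^+2 + T - 1)^+2))) (hW : W = ((-3*T^+5 + 10*T^+4 - 20*T^+3 + 20*T^+2 - 20*T + 6) / ((T - 2) * (T^+2 + T - 1)^+2)))
  (hA0 : A0 = (- ((T^+2 + 1) * (T^+3 - T^+2 + 2*T - 3)) / ((T^+4 - 3*T^+3 - T^+2 + 3*T + 1) * (T - 2)))) (hA1 : A1 = (- (3*T^+7 - 9*T^+6 + 16*T^+5 - 15*T^+4 + 10*T^+3 - 11*T^+2 + 8*T - 7) / ((T^+2 + T - 1) * ((T^+4 - 3*T^+3 - T^+2 + 3*T + 1) * (T - 2))))) (hA2 : A2 = ((2*T^+8 - 14*T^+7 + 52*T^+6 - 99*T^+5 + 100*T^+4 - 54*T^+3 + 38*T^+2 - 44*T + 13) / ((T^+2 + T - 1) * (T - 2) * ((T^+4 - 3*T^+3 - T^+2 + 3*T + 1) * (T - 2))))) (hA3 : A3 = ((T^+8 + T^+7 - 21*T^+6 + 65*T^+5 - 90*T^+4 + 78*T^+3 - 57*T^+2 + 32*T - 15) / ((T^+2 + T - 1) * (T - 2) * ((T^+4 - 3*T^+3 - T^+2 + 3*T + 1)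 * (T - 2))))) (hA4 : A4 = (- (2*T^+5 - 6*T^+4 + 13*T^+3 - 14*T^+2 + 7*T - 5) / ((T^+4 - 3*T^+3 - T^+2 + 3*T + 1) * (T - 2)))) (hA5 : A5 = (- ((T^+2 + T - 1) * (T^+3 - T^+2 + 2*T - 3)) / ((T^+4 - 3*T^+3 - T^+2 + 3*T + 1) * (T - 2))))
  (hx : (x^+6 + U*x^+5 + V*x^+4 + W*x^+3 + V*x^+2 + U*x + 1) = 0) :
  let y := (A0 + A1*x + A2*x^+2 + A3*x^+3 + A4*x^+4 + A5*x^+5) in
  y^+6 + U*y^+5 + V*y^+4 + W*y^+3 + V*y^+2 + U*y + 1 = 0 /\
  x^+5 + y^+5 + 1 = 0 /\ x^+2 + y^+2 + 1 + T * (x*y + x*1 + y*1) = 0.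
Proof.
move=> y.
have n2 : (2:algC) != 0 by rewrite pnatr_eq0.

have e2 : y^+2 = (((- 2 * T^+4 + 4 * T^+3 - T^+2 - 1) / ((T^+4 - 3*T^+3 - T^+2 + 3*T + 1))) + ((- 3 * T^+6 + 10 * T^+5 - 10 * T^+4 + 5 * T^+3 - 5 * T^+2 + 6 * T) / ((T^+2 + T - 1) * (T^+4 - 3*T^+3 - T^+2 + 3*T + 1))) * x + ((4 * T^+6 - 13 * T^+5 + 20 * T^+4 - 15 * T^+3 + 10 * T^+2 - 3 * T + 1) / ((T^+2 + T - 1) * (T^+4 - 3*T^+3 - T^+2 + 3*T + 1))) * x^+2 + ((5 * T^+5 - 15 * T^+4 + 20 * T^+3 - 10 * T^+2 + 5 * T) / ((T^+2 + T - 1) * (T^+4 - 3*T^+3 - T^+2 + 3*T + 1))) * x^+3 + ((- 3 * T^+4 + 8 * T^+3 - 6 * T^+2 + 4 * T) / ((T^+4 - 3*T^+3 - T^+2 + 3*T + 1))) * x^+4 + ((- T^+4 + T^+3 + 3 * T^+2 - 2 * T) / ((T^+4 - 3*T^+3 - T^+2 + 3*T + 1))) * x^+5).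
  have E : y^+2 = (((- 2 * T^+4 + 4 * T^+3 - T^+2 - 1) / ((T^+4 - 3*T^+3 - T^+2 + 3*T + 1))) + ((- 3 * T^+6 + 10 * T^+5 - 10 * T^+4 + 5 * T^+3 - 5 * T^+2 + 6 * T) / ((T^+2 + T - 1) * (T^+4 - 3*T^+3 - T^+2 + 3*T + 1))) * x + ((4 * T^+6 - 13 * T^+5 + 20 * T^+4 - 15 * T^+3 + 10 * T^+2 - 3 * T + 1) / ((T^+2 + T - 1) * (T^+4 - 3*T^+3 - T^+2 + 3*T + 1))) * x^+2 + ((5 * T^+5 - 15 * T^+4 + 20 * T^+3 - 10 * T^+2 + 5 * T) / ((T^+2 + T - 1) * (T^+4 - 3*T^+3 - T^+2 + 3*T + 1))) * x^+3 + ((- 3 * T^+4 + 8 * T^+3 - 6 * T^+2 + 4 * T) / ((T^+4 - 3*T^+3 - T^+2 + 3*T + 1))) * x^+4 + ((- T^+4 + T^+3 + 3 * T^+2 - 2 * T) / ((T^+4 - 3*T^+3 - T^+2 + 3*T + 1))) * x^+5) + (((3 * T^+10 - 20 * T^+9 + 66 * T^+8 - 91 * T^+7 + 27 * T^+6 + 30 * T^+5 + 10 * T^+4 - 47 * T^+3 + 17 * T^+2 - 4 * T + 13) / ((T - 2)^+2 * (T^+4 - 3*T^+3 - T^+2 + 3*T + 1)^+2)) + ((11 * T^+8 - 40 * T^+7 + 58 * T^+6 - 54 * T^+5 + 40 * T^+4 - 2 * T^+3 - 5 * T^+2 - 21 * T + 8) / ((T - 2) * (T^+4 - 3*T^+3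 - T^+2 + 3*T + 1)^+2)) * x + ((- 2 * T^+11 + 7 * T^+10 + 6 * T^+9 - 93 * T^+8 + 264 * T^+7 - 439 * T^+6 + 523 * T^+5 - 442 * T^+4 + 251 * T^+3 - 98 * T^+2 + 46 * T - 29) / ((T - 2)^+3 * (T^+4 - 3*T^+3 - T^+2 + 3*T + 1)^+2)) * x^+2 + ((T^+8 - 3 * T^+7 - T^+5 - 5 * T^+4 + 18 * T^+3 - 9 * T^+2 + 5 * T - 3) / ((T^+4 - 3*T^+3 - T^+2 + 3*T + 1)^+2)) * x^+3 + ((T^+10 - 10 * T^+6 + 6 * T^+5 + 25 * T^+2 - 30 * T + 9) / ((T - 2)^+2 * (T^+4 - 3*T^+3 - T^+2 + 3*T + 1)^+2)) * x^+4) * (x^+6 + U*x^+5 + V*x^+4 + W*x^+3 + V*x^+2 + U*x + 1).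
    rewrite /y; subst U V W A0 A1 A2 A3 A4 A5; field; by rewrite ?h1 ?h2 ?h3 ?n2.
  by rewrite  E hx mulr0 addr0.

have e3 : y^+3 = (((- 3 * T^+4 + 4 * T^+3 - 2 * T^+2 + T + 2) / ((T^+4 - 3*T^+3 - T^+2 + 3*T + 1))) + ((- 4 * T^+6 + 6 * T^+5 - 10 * T^+4 + 15 * T^+3 - 5 * T^+2 - 2 * T + 3) / ((T^+2 + T - 1) * (T^+4 - 3*T^+3 - T^+2 + 3*T + 1))) * x + ((4 * T^+7 - 20 * T^+6 + 49 * T^+5 - 60 * T^+4 + 45 * T^+3 - 13 * T^+2 - 15 * T + 7) / ((T^+2 + T - 1) * (T - 2) * (T^+4 - 3*T^+3 - T^+2 + 3*T + 1))) * x^+2 + ((T^+7 + 5 * T^+6 - 29 * T^+5 + 60 * T^+4 - 50 * T^+3 + 8 * T^+2 + 10 * T - 7) / ((T^+2 + T - 1) * (T - 2) * (T^+4 - 3*T^+3 - T^+2 + 3*T + 1))) * x^+3 + ((- 4 * T^+4 + 8 * T^+3 - 7 * T^+2 + 3) / ((T^+4 - 3*T^+3 - T^+2 + 3*T + 1))) * x^+4 + ((- 2 * T^+4 - T^+3 + 4 * T^+2 - 1) / ((T^+4 - 3*T^+3 - T^+2 + 3*T + 1))) * x^+5).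
  have E : y * ((((- 2 * T^+4 + 4 * T^+3 - T^+2 - 1) / ((T^+4 - 3*T^+3 - T^+2 + 3*T + 1))) + ((- 3 * T^+6 + 10 * T^+5 - 10 * T^+4 + 5 * T^+3 - 5 * T^+2 + 6 * T) / ((T^+2 + T - 1) * (T^+4 - 3*T^+3 - T^+2 + 3*T + 1))) * x + ((4 * T^+6 - 13 * T^+5 + 20 * T^+4 - 15 * T^+3 + 10 * T^+2 - 3 * T + 1) / ((T^+2 + T - 1) * (T^+4 - 3*T^+3 - T^+2 + 3*T + 1))) * x^+2 + ((5 * T^+5 - 15 * T^+4 + 20 * T^+3 - 10 * T^+2 + 5 * T) / ((T^+2 + T - 1) * (T^+4 - 3*T^+3 - T^+2 + 3*T + 1))) * x^+3 + ((- 3 * T^+4 + 8 * T^+3 - 6 * T^+2 + 4 * T) / ((T^+4 - 3*T^+3 - T^+2 + 3*T + 1))) * x^+4 + ((- T^+4 + T^+3 + 3 * T^+2 - 2 * T) / ((T^+4 - 3*T^+3 - T^+2 + 3*T + 1))) * x^+5)) = (((- 3 * T^+4 + 4 * T^+3 - 2 * T^+2 + T + 2) / ((T^+4 - 3*T^+3 - T^+2 + 3*T + 1))) + ((- 4 * T^+6 + 6 * T^+5 - 10 * T^+4 + 15 * T^+3 - 5 * T^+2 - 2 * T + 3) / ((T^+2 + T - 1) * (T^+4 - 3*T^+3 - T^+2 + 3*T + 1))) * x + ((4 * T^+7 - 20 * T^+6 + 49 * T^+5 - 60 * T^+4 + 45 * T^+3 - 13 * T^+2 - 15 * T + 7) /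 ((T^+2 + T - 1) * (T - 2) * (T^+4 - 3*T^+3 - T^+2 + 3*T + 1))) * x^+2 + ((T^+7 + 5 * T^+6 - 29 * T^+5 + 60 * T^+4 - 50 * T^+3 + 8 * T^+2 + 10 * T - 7) / ((T^+2 + T - 1) * (T - 2) * (T^+4 - 3*T^+3 - T^+2 + 3*T + 1))) * x^+3 + ((- 4 * T^+4 + 8 * T^+3 - 7 * T^+2 + 3) / ((T^+4 - 3*T^+3 - T^+2 + 3*T + 1))) * x^+4 + ((- 2 * T^+4 - T^+3 + 4 * T^+2 - 1) / ((T^+4 - 3*T^+3 - T^+2 + 3*T + 1))) * x^+5) + (((5 * T^+9 - 25 * T^+8 + 48 * T^+7 - 37 * T^+6 + 2 * T^+5 + 10 * T^+4 - 16 * T^+2 + 14 * T + 1) / ((T - 2) * (T^+4 - 3*T^+3 - T^+2 + 3*T + 1)^+2)) + ((- 2 * T^+9 + 18 * T^+8 - 64 * T^+7 + 104 * T^+6 - 79 * T^+5 + 24 * T^+4 - 11 * T^+3 + 18 * T^+2 - 8 * T + 3) / ((T - 2) * (T^+4 - 3*T^+3 - T^+2 + 3*T + 1)^+2)) * x + ((- 2 * T^+9 + 24 * T^+7 - 67 * T^+6 + 95 * T^+5 - 86 * T^+4 + 45 * T^+3 - 13 * T^+2 + 9 * T) / ((T - 2) * (T^+4 - 3*T^+3 - T^+2 + 3*T + 1)^+2)) * x^+2 + ((2 * T^+8 - 4 * T^+7 + 5 * T^+6 + 5 * T^+5 - 20 * T^+4 + 16 * T^+3 - 12 * T^+2 +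 5 * T) / ((T^+4 - 3*T^+3 - T^+2 + 3*T + 1)^+2)) * x^+3 + ((T^+8 + T^+7 - T^+6 - 5 * T^+4 - 2 * T^+3 + 8 * T^+2 - 3 * T) / ((T^+4 - 3*T^+3 - T^+2 + 3*T + 1)^+2)) * x^+4) * (x^+6 + U*x^+5 + V*x^+4 + W*x^+3 + V*x^+2 + U*x + 1).
    rewrite /y; subst U V W A0 A1 A2 A3 A4 A5; field; by rewrite ?h1 ?h2 ?h3 ?n2.
  by rewrite exprS e2 E hx mulr0 addr0.

have e4 : y^+4 = (((- 2 * T^+4 + 5 * T^+3 - 2 * T^+2 - 3 * T + 1) / ((T^+4 - 3*T^+3 - T^+2 + 3*T + 1))) + ((- T^+6 + 5 * T^+5 - 10 * T^+4 + 10 * T^+3 - 8 * T) / ((T^+2 + T - 1) * (T^+4 - 3*T^+3 - T^+2 + 3*T + 1))) * x + ((3 * T^+6 - 9 * T^+5 + 15 * T^+4 - 10 * T^+3 - 5 * T^+2 + 4 * T - 2) / ((T^+2 + T - 1) * (T^+4 - 3*T^+3 - T^+2 + 3*T + 1))) * x^+2 + ((- T^+6 + 5 * T^+5 - 10 * T^+4 + 10 * T^+3 - 8 * T) / ((T^+2 + T - 1) * (T^+4 - 3*T^+3 - T^+2 + 3*T + 1))) * x^+3 + ((- 2 * T^+4 + 5 * T^+3 - 2 * T^+2 - 3 * T + 1) / ((T^+4 - 3*T^+3 - T^+2 + 3*T + 1))) * x^+4).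
  have E : y * ((((- 3 * T^+4 + 4 * T^+3 - 2 * T^+2 + T + 2) / ((T^+4 - 3*T^+3 - T^+2 + 3*T + 1))) + ((- 4 * T^+6 + 6 * T^+5 - 10 * T^+4 + 15 * T^+3 - 5 * T^+2 - 2 * T + 3) / ((T^+2 + T - 1) * (T^+4 - 3*T^+3 - T^+2 + 3*T + 1))) * x + ((4 * T^+7 - 20 * T^+6 + 49 * T^+5 - 60 * T^+4 + 45 * T^+3 - 13 * T^+2 - 15 * T + 7) / ((T^+2 + T - 1) * (T - 2) * (T^+4 - 3*T^+3 - T^+2 + 3*T + 1))) * x^+2 + ((T^+7 + 5 * T^+6 - 29 * T^+5 + 60 * T^+4 - 50 * T^+3 + 8 * T^+2 + 10 * T - 7) / ((T^+2 + T - 1) * (T - 2) * (T^+4 - 3*T^+3 - T^+2 + 3*T + 1))) * x^+3 + ((- 4 * T^+4 + 8 * T^+3 - 7 * T^+2 + 3) / ((T^+4 - 3*T^+3 - T^+2 + 3*T + 1))) * x^+4 + ((- 2 * T^+4 - T^+3 + 4 * T^+2 - 1) / ((T^+4 - 3*T^+3 - T^+2 + 3*T + 1))) * x^+5)) = (((- 2 * T^+4 + 5 * T^+3 - 2 * T^+2 - 3 * T + 1) / ((T^+4 - 3*T^+3 - T^+2 + 3*T + 1))) + ((- T^+6 + 5 * T^+5 - 10 * T^+4 + 10 * T^+3 - 8 * T) / ((T^+2 + T - 1) * (T^+4 - 3*T^+3 - T^+2 + 3*T + 1))) * x + ((3 * T^+6 - 9 * T^+5 + 15 * T^+4 - 10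 * T^+3 - 5 * T^+2 + 4 * T - 2) / ((T^+2 + T - 1) * (T^+4 - 3*T^+3 - T^+2 + 3*T + 1))) * x^+2 + ((- T^+6 + 5 * T^+5 - 10 * T^+4 + 10 * T^+3 - 8 * T) / ((T^+2 + T - 1) * (T^+4 - 3*T^+3 - T^+2 + 3*T + 1))) * x^+3 + ((- 2 * T^+4 + 5 * T^+3 - 2 * T^+2 - 3 * T + 1) / ((T^+4 - 3*T^+3 - T^+2 + 3*T + 1))) * x^+4) + (((5 * T^+9 - 22 * T^+8 + 52 * T^+7 - 49 * T^+6 - 14 * T^+5 + 25 * T^+4 + 24 * T^+3 - 24 * T^+2 - 2 * T + 8) / ((T - 2) * (T^+4 - 3*T^+3 - T^+2 + 3*T + 1)^+2)) + ((- T^+9 + 18 * T^+8 - 71 * T^+7 + 115 * T^+6 - 69 * T^+5 - 3 * T^+4 - 11 * T^+3 + 22 * T^+2 + 10 * T - 7) / ((T - 2) * (T^+4 - 3*T^+3 - T^+2 + 3*T + 1)^+2)) * x + ((- 3 * T^+10 + 7 * T^+9 + 22 * T^+8 - 140 * T^+7 + 277 * T^+6 - 265 * T^+5 + 136 * T^+4 - 34 * T^+3 - 5 * T^+2 + 16 * T - 13) / ((T - 2)^+2 * (T^+4 - 3*T^+3 - T^+2 + 3*T + 1)^+2)) * x^+2 + ((2 * T^+8 - 7 * T^+7 + 2 * T^+6 + 13 * T^+5 - 15 * T^+4 + 16 * T^+3 - 11 * T^+2 - 4 * T + 4) / ((T^+4 - 3*T^+3 - T^+2 + 3*T + 1)^+2))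 * x^+3 + ((2 * T^+9 + T^+8 - 4 * T^+7 - 9 * T^+5 + T^+4 + 23 * T^+3 - 12 * T^+2 - 5 * T + 3) / ((T - 2) * (T^+4 - 3*T^+3 - T^+2 + 3*T + 1)^+2)) * x^+4) * (x^+6 + U*x^+5 + V*x^+4 + W*x^+3 + V*x^+2 + U*x + 1).
    rewrite /y; subst U V W A0 A1 A2 A3 A4 A5; field; by rewrite ?h1 ?h2 ?h3 ?n2.
  by rewrite exprS e3 E hx mulr0 addr0.

have e5 : y^+5 = ((- 1) + (- 1) * x^+5).
  have E : y * ((((- 2 * T^+4 + 5 * T^+3 - 2 * T^+2 - 3 * T + 1) / ((T^+4 - 3*T^+3 - T^+2 + 3*T + 1))) + ((- T^+6 + 5 * T^+5 - 10 * T^+4 + 10 * T^+3 - 8 * T) / ((T^+2 + T - 1) * (T^+4 - 3*T^+3 - T^+2 + 3*T + 1))) * x + ((3 * T^+6 - 9 * T^+5 + 15 * T^+4 - 10 * T^+3 - 5 * T^+2 + 4 * T - 2) / ((T^+2 + T - 1) * (T^+4 - 3*T^+3 - T^+2 + 3*T + 1))) * x^+2 + ((- T^+6 + 5 * T^+5 - 10 * T^+4 + 10 * T^+3 - 8 * T) / ((T^+2 + T - 1) * (T^+4 - 3*T^+3 - T^+2 + 3*T + 1))) * x^+3 + ((- 2 * T^+4 + 5 * T^+3 - 2 * T^+2 - 3 * T + 1) / ((T^+4 - 3*T^+3 - T^+2 + 3*T + 1))) * x^+4)) = ((- 1) + (- 1) * x^+5) + (((3 * T^+9 - 15 * T^+8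 + 32 * T^+7 - 24 * T^+6 - 13 * T^+5 + 4 * T^+4 + 35 * T^+3 - 4 * T^+2 - 22 * T + 1) / ((T - 2) * (T^+4 - 3*T^+3 - T^+2 + 3*T + 1)^+2)) + ((- 2 * T^+9 + 14 * T^+8 - 47 * T^+7 + 69 * T^+6 - 30 * T^+5 - 11 * T^+4 + 7 * T^+3 - T^+2 + 2 * T - 5) / ((T - 2) * (T^+4 - 3*T^+3 - T^+2 + 3*T + 1)^+2)) * x + ((- T^+9 - 3 * T^+8 + 26 * T^+7 - 51 * T^+6 + 38 * T^+5 - 13 * T^+4 + 11 * T^+3 + 8 * T^+2 - 18 * T - 1) / ((T - 2) * (T^+4 - 3*T^+3 - T^+2 + 3*T + 1)^+2)) * x^+2 + ((2 * T^+9 - 5 * T^+8 + 2 * T^+7 + 3 * T^+6 - 11 * T^+5 + 31 * T^+4 - 25 * T^+3 - 9 * T^+2 + 14 * T - 3) / ((T - 2) * (T^+4 - 3*T^+3 - T^+2 + 3*T + 1)^+2)) * x^+3) * (x^+6 + U*x^+5 + V*x^+4 + W*x^+3 + V*x^+2 + U*x + 1).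
    rewrite /y; subst U V W A0 A1 A2 A3 A4 A5; field; by rewrite ?h1 ?h2 ?h3 ?n2.
  by rewrite exprS e4 E hx mulr0 addr0.

have e6 : y^+6 = (((T^+4 - 2 * T^+3 + 3 * T^+2 - 2) / ((T^+4 - 3*T^+3 - T^+2 + 3*T + 1))) * x + ((- T^+9 + 10 * T^+8 - 31 * T^+7 + 36 * T^+6 - 12 * T^+5 - 3 * T^+4 - 15 * T^+3 + 2 * T^+2 + 18 * T - 1) / ((T^+2 + T - 1)^+2 * (T - 2) * (T^+4 - 3*T^+3 - T^+2 + 3*T + 1))) * x^+2 + ((T^+9 - 15 * T^+8 + 51 * T^+7 - 66 * T^+6 + 22 * T^+5 + 3 * T^+4 + 8 * T^+2 - 8 * T + 6) / ((T^+2 + T - 1)^+2 * (T - 2) * (T^+4 - 3*T^+3 - T^+2 + 3*T + 1))) * x^+3 + ((- T^+9 + 10 * T^+8 - 31 * T^+7 + 36 * T^+6 - 12 * T^+5 - 3 * T^+4 - 15 * T^+3 + 2 * T^+2 + 18 * T - 1) / ((T^+2 + T - 1)^+2 * (T - 2) * (T^+4 - 3*T^+3 - T^+2 + 3*T + 1))) * x^+4 + ((T^+4 - 2 * T^+3 + 3 * T^+2 - 2) / ((T^+4 - 3*T^+3 - T^+2 + 3*T + 1))) * x^+5).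
  have E : y * (((- 1) + (- 1) * x^+5)) = (((T^+4 - 2 * T^+3 + 3 * T^+2 - 2) / ((T^+4 - 3*T^+3 - T^+2 + 3*T + 1))) * x + ((- T^+9 + 10 * T^+8 - 31 * T^+7 + 36 * T^+6 - 12 * T^+5 - 3 * T^+4 - 15 * T^+3 + 2 * T^+2 + 18 * T - 1) / ((T^+2 + T - 1)^+2 * (T - 2) * (T^+4 - 3*T^+3 - T^+2 + 3*T + 1))) * x^+2 + ((T^+9 - 15 * T^+8 + 51 * T^+7 - 66 * T^+6 + 22 * T^+5 + 3 * T^+4 + 8 * T^+2 - 8 * T + 6) / ((T^+2 + T - 1)^+2 * (T - 2) * (T^+4 - 3*T^+3 - T^+2 + 3*T + 1))) * x^+3 + ((- T^+9 + 10 * T^+8 - 31 * T^+7 + 36 * T^+6 - 12 * T^+5 - 3 * T^+4 - 15 * T^+3 + 2 * T^+2 + 18 * T - 1) / ((T^+2 + T - 1)^+2 * (T - 2) * (T^+4 - 3*T^+3 - T^+2 + 3*T + 1))) * x^+4 + ((T^+4 - 2 * T^+3 + 3 * T^+2 - 2) / ((T^+4 - 3*T^+3 - T^+2 + 3*T + 1))) * x^+5) + (((T^+5 - T^+4 + 3 * T^+3 - 4 * T^+2 + 2 * T - 3) / ((T - 2) * (T^+4 - 3*T^+3 - T^+2 + 3*T + 1))) + ((- T^+5 + 5 * T - 3) / ((T - 2) * (T^+4 - 3*T^+3 - T^+2 + 3*T + 1))) * x + ((T^+5 + T^+4 - 3 * T^+3 - T^+2 + 3 * T - 1) / ((T - 2)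 * (T^+4 - 3*T^+3 - T^+2 + 3*T + 1))) * x^+2 + ((- T^+5 - T^+4 + 3 * T^+3 + T^+2 - 3 * T + 1) / ((T - 2) * (T^+4 - 3*T^+3 - T^+2 + 3*T + 1))) * x^+3 + ((T^+5 - 5 * T + 3) / ((T - 2) * (T^+4 - 3*T^+3 - T^+2 + 3*T + 1))) * x^+4) * (x^+6 + U*x^+5 + V*x^+4 + W*x^+3 + V*x^+2 + U*x + 1).
    rewrite /y; subst U V W A0 A1 A2 A3 A4 A5; field; by rewrite ?h1 ?h2 ?h3 ?n2.
  by rewrite exprS e5 E hx mulr0 addr0.

have exy : x * y = (((T^+5 - 5 * T + 3) / ((T - 2) * (T^+4 - 3*T^+3 - T^+2 + 3*T + 1))) + ((2 * T^+5 - 4 * T^+4 + 7 * T^+3 - 11 * T^+2 + 8 * T - 3) / ((T - 2) * (T^+4 - 3*T^+3 - T^+2 + 3*T + 1))) * x + ((- 2 * T^+6 + 11 * T^+5 - 30 * T^+4 + 45 * T^+3 - 45 * T^+2 + 29 * T - 7) / ((T - 2)^+2 * (T^+4 - 3*T^+3 - T^+2 + 3*T + 1))) * x^+2 + ((- T^+6 + 15 * T^+4 - 45 * T^+3 + 50 * T^+2 - 23 * T + 5) / ((T - 2)^+2 * (T^+4 - 3*T^+3 - T^+2 + 3*T + 1))) * x^+3 + ((2 * T^+5 - 3 * T^+4 - T^+3 + 8 * T^+2 - 9 * T + 3) / ((T - 2) * (T^+4 - 3*T^+3 - T^+2 + 3*T + 1))) * x^+4 + ((T^+5 + T^+4 -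 3 * T^+3 - T^+2 + 3 * T - 1) / ((T - 2) * (T^+4 - 3*T^+3 - T^+2 + 3*T + 1))) * x^+5).
  have E : x * y = (((T^+5 - 5 * T + 3) / ((T - 2) * (T^+4 - 3*T^+3 - T^+2 + 3*T + 1))) + ((2 * T^+5 - 4 * T^+4 + 7 * T^+3 - 11 * T^+2 + 8 * T - 3) / ((T - 2) * (T^+4 - 3*T^+3 - T^+2 + 3*T + 1))) * x + ((- 2 * T^+6 + 11 * T^+5 - 30 * T^+4 + 45 * T^+3 - 45 * T^+2 + 29 * T - 7) / ((T - 2)^+2 * (T^+4 - 3*T^+3 - T^+2 + 3*T + 1))) * x^+2 + ((- T^+6 + 15 * T^+4 - 45 * T^+3 + 50 * T^+2 - 23 * T + 5) / ((T - 2)^+2 * (T^+4 - 3*T^+3 - T^+2 + 3*T + 1))) * x^+3 + ((2 * T^+5 - 3 * T^+4 - T^+3 + 8 * T^+2 - 9 * T + 3) / ((T - 2) * (T^+4 - 3*T^+3 - T^+2 + 3*T + 1))) * x^+4 + ((T^+5 + T^+4 - 3 * T^+3 - T^+2 + 3 * T - 1) / ((T - 2) * (T^+4 - 3*T^+3 - T^+2 + 3*T + 1))) * x^+5) + (((- T^+5 + 5 * T - 3) / ((T - 2) * (T^+4 - 3*T^+3 - T^+2 + 3*T + 1)))) * (x^+6 + U*x^+5 + V*x^+4 + W*x^+3 + V*x^+2 + U*x + 1).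
    rewrite /y; subst U V W A0 A1 A2 A3 A4 A5; field; by rewrite ?h1 ?h2 ?h3 ?n2.
  by rewrite E hx mulr0 addr0.
split; last split.
- rewrite e6 e5 e4 e3 e2 /y; subst U V W A0 A1 A2 A3 A4 A5; field; by rewrite ?h1 ?h2 ?h3 ?n2.
- rewrite e5; ring.
- rewrite e2 exy /y; subst U V W A0 A1 A2 A3 A4 A5; field; by rewrite ?h1 ?h2 ?h3 ?n2.
Qed.
Lemma hL (c : rat) n (z : algC) : (map_poly ratr (c%:P * 'X^n)).[z] = ratr c * z^+n.
Proof. by rewrite rmorphM [X in X * _]/= [X in _ * X]/= map_polyC map_polyXn !hornerE. Qed.
Lemma hL1 (c : rat) (z : algC) : (map_poly ratr (c%:P * 'X)).[z] = ratr c * z.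
Proof. by have := hL c 1 z; rewrite expr1. Qed.
Lemma hLX n (z : algC) : (map_poly (@ratr algC) 'X^n).[z] = z^+n.
Proof. by rewrite map_polyXn !hornerE. Qed.
Lemma hL0 (z : algC) : (map_poly (@ratr algC) 1).[z] = 1.
Proof. by rewrite rmorph1 !hornerE. Qed.
Lemma horner_f (c1 c2 c3 : rat) (z : algC) :
  (map_poly ratr ('X^6 + c1%:P * 'X^5 + c2%:P*'X^4 + c3%:P*'X^3 + c2%:P*'X^2 + c1%:P*'X + 1 : {poly rat})).[z]
  = z^+6 + ratr c1 * z^+5 + ratr c2 * z^+4 + ratr c3 * z^+3 + ratr c2 * z^+2 + ratr c1 * z + 1.
Proof.
by rewrite !raddfD !hornerD hLX !hL hL1 hL0.
Qed.
Ltac rm_tac := rewrite ?(fmorph_div, fmorphV, rmorphXn, rmorphB, rmorphD, rmorphN, rmorphM, rmorph_nat, rmorph1).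

Theorem proposition3 (t : rat) (ht : t != 2) (x : algC)
  (hx : root (map_poly ratr (f_t t)) x) :
  let y := \sum_(i < 6) ratr (a_coef t i) * x ^+ i in
  root (map_poly ratr (f_t t)) y /\
  fermat5 x y 1 = 0 /\ conic_t t x y 1 = 0.
Proof.
move=> y.
set T : algC := ratr t.
have h1 : T^+2 + T - 1 != 0.
  apply: contra (d1_neq0 t) => /eqP h; apply/eqP; apply: (fmorph_inj (@ratr algC)); rm_tac; rewrite ?rmorph0; exact: h.
have h2 : T - 2 != 0.
  have h0 : t - 2 != 0 by rewrite subr_eq0.
  apply: contra h0 => /eqP h; apply/eqP; apply: (fmorph_inj (@ratr algC)); rm_tac; rewrite ?rmorph0; exact: h.
have h3 : T^+4 - 3*T^+3 - T^+2 + 3*T + 1 != 0.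
  apply: contra (d3_neq0 t) => /eqP h; apply/eqP; apply: (fmorph_inj (@ratr algC)); rm_tac; rewrite ?rmorph0; exact: h.
have fE (z : algC) : (map_poly ratr (f_t t)).[z] =
   z^+6 + ratr (u_t t)*z^+5 + ratr (v_t t)*z^+4 + ratr (w_t t)*z^+3 + ratr (v_t t)*z^+2 + ratr (u_t t)*z + 1.
  exact: horner_f.
have ey : y = ratr (a0 t) + ratr (a1 t) * x + ratr (a2 t) * x^+2 + ratr (a3 t) * x^+3 + ratr (a4 t) * x^+4 + ratr (a5 t) * x^+5.
  by rewrite /y !big_ord_recl big_ord0 /= /bump /= expr0 mulr1 expr1 addr0 !addrA.
have hU : ratr (u_t t) = ((3*T^+2 - 2*T + 2) / (T^+2 + T - 1)) :> algC
  by rewrite /u_t; field; rewrite ?h1 ?h2 ?h3.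
have hV : ratr (v_t t) = ((T^+5 - 5*T^+4 + 10*T^+3 - 20*T^+2 + 15*T - 7) / ((T - 2) * (T^+2 + T - 1)^+2)) :> algC
  by rewrite /v_t; field; rewrite ?h1 ?h2 ?h3.
have hW : ratr (w_t t) = ((-3*T^+5 + 10*T^+4 - 20*T^+3 + 20*T^+2 - 20*T + 6) / ((T - 2) * (T^+2 + T - 1)^+2)) :> algC
  by rewrite /w_t; field; rewrite ?h1 ?h2 ?h3.
have hA0 : ratr (a0 t) = (- ((T^+2 + 1) * (T^+3 - T^+2 + 2*T - 3)) / ((T^+4 - 3*T^+3 - T^+2 + 3*T + 1) * (T - 2))) :> algC
  by rewrite /a0 /s_t; field; rewrite ?h1 ?h2 ?h3.
have hA1 : ratr (a1 t) = (- (3*T^+7 - 9*T^+6 + 16*T^+5 - 15*T^+4 + 10*T^+3 - 11*T^+2 + 8*T - 7) / ((T^+2 + T - 1) * ((T^+4 - 3*T^+3 - T^+2 + 3*T + 1) * (T - 2)))) :> algC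
  by rewrite /a1 /s_t; field; rewrite ?h1 ?h2 ?h3.
have hA2 : ratr (a2 t) = ((2*T^+8 - 14*T^+7 + 52*T^+6 - 99*T^+5 + 100*T^+4 - 54*T^+3 + 38*T^+2 - 44*T + 13) / ((T^+2 + T - 1) * (T - 2) * ((T^+4 - 3*T^+3 - T^+2 + 3*T + 1) * (T - 2)))) :> algC
  by rewrite /a2 /s_t; field; rewrite ?h1 ?h2 ?h3.
have hA3 : ratr (a3 t) = ((T^+8 + T^+7 - 21*T^+6 + 65*T^+5 - 90*T^+4 + 78*T^+3 - 57*T^+2 + 32*T - 15) / ((T^+2 + T - 1) * (T - 2) * ((T^+4 - 3*T^+3 - T^+2 + 3*T + 1) * (T - 2)))) :> algC
  by rewrite /a3 /s_t; field; rewrite ?h1 ?h2 ?h3.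
have hA4 : ratr (a4 t) = (- (2*T^+5 - 6*T^+4 + 13*T^+3 - 14*T^+2 + 7*T - 5) / ((T^+4 - 3*T^+3 - T^+2 + 3*T + 1) * (T - 2))) :> algC
  by rewrite /a4 /s_t; field; rewrite ?h1 ?h2 ?h3.
have hA5 : ratr (a5 t) = (- ((T^+2 + T - 1) * (T^+3 - T^+2 + 2*T - 3)) / ((T^+4 - 3*T^+3 - T^+2 + 3*T + 1) * (T - 2))) :> algC
  by rewrite /a5 /s_t; field; rewrite ?h1 ?h2 ?h3.
have hx' : x^+6 + ratr (u_t t)*x^+5 + ratr (v_t t)*x^+4 + ratr (w_t t)*x^+3 + ratr (v_t t)*x^+2 + ratr (u_t t)*x + 1 = 0.
  by move: hx; rewrite /root fE => /eqP.
have := @key T x _ _ _ _ _ _ _ _ _ h1 h2 h3 hU hV hW hA0 hA1 hA2 hA3 hA4 hA5 hx'.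
move=> /= [k1 [k2 k3]].
split; last split.
- by apply/eqP; rewrite fE ey; exact: k1.
- by rewrite /fermat5 expr1n ey; exact: k2.
- by rewrite /conic_t expr1n ey; exact: k3.
Qed.
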